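(* Let $\mu$ and $\nu$ be positive Borel measures on $\mathbb{R}$ of infinite support with finite moments, both determinate (so polynomials are dense in $L^2(\mu)$ and $L^2(\nu)$), and suppose $d\mu=r\,d\nu$ for a real polynomial $r$ of degree $1$. Let $\Phi_n$ (resp. $\phi_n$) be the orthonormal polynomials of degree $n$ for $\mu$ (resp. $\nu$). Let $L$ be a self-adjoint operator on $L^2(\mu)$ with domain the polynomials $\mathcal{P}$ (i.e. symmetric on $\mathcal{P}$) such that $L\Phi_n=\Lambda_n\Phi_n$ with $\Lambda_n\in\mathbb{R}$, and let $\gamma$ be a constant. Then the operator $T=r(L+\gamma)$ with domain $\mathcal{P}$ on $L^2(\nu)$ (where $r$ denotes multiplication by $r$) is tridiagonal with respect to $\{\phi_n\}_{n\in\mathbb{N}}$: $\langle T\phi_n,\phi_m\rangle_{L^2(\nu)}=0$ whenever $|n-m|>1$, i.e. $T\phi_n$ is a linear combination of $\phi_{n-1},\phi_n,\phi_{n+1}$.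
   Context: Here $d\mu=r\,d\nu$ means $\int f\,d\mu=\int fr\,d\nu$ for all integrable $f$; orthonormal polynomials have real coefficients and positive leading coefficient, with $\phi_{-1}=0$. *)

(* Defs.v *)
From HB Require Import structures.
From mathcomp Require Import all_boot all_order all_algebra.
From mathcomp Require Import all_classical all_reals all_analysis.
Set Implicit Arguments. Unset Strict Implicit. Unset Printing Implicit Defensive.
Import Order.TTheory GRing.Theory Num.Theory.
Import numFieldNormedType.Exports.
Local Open Scope classical_set_scope.
Local Open Scope ring_scope.

Definition finite_moments (R : realType) (mu : {measure set R -> \bar R}) :=
  forall k : nat, mu.-integrable setT (fun x : R => (x ^+ k)%:E).

Definition moment (R : realType) (mu : {measure set R -> \bar R}) (k : nat) :=
  (\int[mu]_x (x ^+ k)%:E)%E.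

Definition msupport (R : realType) (mu : {measure set R -> \bar R}) : set R :=
  [set x | forall e : R, 0 < e -> (0 < mu (ball x e))%E].

Definition infinite_support (R : realType) (mu : {measure set R -> \bar R}) :=
  ~ finite_set (msupport mu).

Definition determinate (R : realType) (mu : {measure set R -> \bar R}) :=
  forall nu : {measure set R -> \bar R},
    finite_moments nu -> (forall k, moment nu k = moment mu k) ->
    forall A, measurable A -> nu A = mu A.

Definition has_density (R : realType) (mu nu : {measure set R -> \bar R})
    (r : {poly R}) :=
  forall f : R -> R, mu.-integrable setT (EFin \o f) ->
    (\int[mu]_x (f x)%:E = \int[nu]_x (f x * r.[x])%:E)%E.

Definition ipoly (R : realType) (mu : {measure set R -> \bar R}) (p q : {poly R}) :=
  (\int[mu]_x (p.[x] * q.[x])%:E)%E.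

Definition orthonormal_polys (R : realType) (mu : {measure set R -> \bar R})
    (Phi : nat -> {poly R}) :=
  (forall n, size (Phi n) = n.+1) /\
  (forall n, 0 < lead_coef (Phi n)) /\
  (forall n m, ipoly mu (Phi n) (Phi m) = ((n == m)%:R)%:E).

(* Main.v *)
Require Import Defs.
From HB Require Import structures.
From mathcomp Require Import all_boot all_order all_algebra.
From mathcomp Require Import all_classical all_reals all_analysis.
From mathcomp Require Import ring zify.
Set Implicit Arguments. Unset Strict Implicit.
Import Order.TTheory GRing.Theory Num.Theory.
Local Open Scope classical_set_scope.
Local Open Scope ring_scope.

Section S.
Variables (R : realType) (mu : {measure set R -> \bar R}).
Hypothesis fm : finite_moments mu.

Lemma size_sub_top (p q : {poly R}) n : (size p <= n.+1)%N -> size q = n.+1 ->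
  (size (p - (p`_n / lead_coef q) *: q)%R <= n)%N.
Proof.
move=> hp hq.
have lq : lead_coef q != 0 by rewrite lead_coef_eq0 -size_poly_eq0 hq.
apply/leq_sizeP => i hi.
rewrite coefB coefZ.
case: (ltngtP n i) => [ni|ni|<-].
- have -> : p`_i = 0 by apply: (leq_sizeP _ _ hp).
  have -> : q`_i = 0 by apply: (leq_sizeP _ _ (eq_leq hq)).
  by rewrite mulr0 subr0.
- by move: hi; rewrite leqNgt ni.
- by move: lq; rewrite /lead_coef hq /= => lq; rewrite -mulrA mulVf // mulr1 subrr.
Qed.

Lemma pint (p : {poly R}) : mu.-integrable setT (fun x => (p.[x])%:E).
Proof.
move: {2}(size p) (leqnn (size p)) => n; elim: n p => [|n IH] p hp.
  move: hp; rewrite leqn0 size_poly_eq0 => /eqP ->.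
  have -> : (fun x => (0 : {poly R}).[x]%:E) = cst 0%E :> (R -> \bar R) by apply/funext => x; rewrite hornerC.
  exact: integrable0.
pose c := p`_n.
have -> : (fun x => (p.[x])%:E) = ((fun x => ((p - c *: 'X^n).[x])%:E) \+ (fun x => c%:E * (x ^+ n)%:E))%E.
  by apply/funext => x /=; rewrite -EFinM -EFinD hornerD hornerN hornerZ hornerXn subrK.
apply: integrableD => //; last exact: integrableZl.
apply: IH; apply/leq_sizeP => i hi; rewrite coefB coefZ coefXn.
case: (ltngtP n i) => [ni|//|<-]; last by rewrite mulr1 subrr.
by rewrite mulr0 subr0; apply: (leq_sizeP _ _ hp).
by move=> ni; move: hi; rewrite leqNgt ni.
Qed.

Definition iR (p q : {poly R}) : R := fine (ipoly mu p q).

Lemma ipolyE p q : ipoly mu p q = (iR p q)%:E.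
Proof.
rewrite /iR fineK // /ipoly.
have -> : (fun x => (p.[x] * q.[x])%:E) = (fun x => ((p * q).[x])%:E) :> (R -> \bar R).
  by apply/funext => x; rewrite hornerM.
exact: integrable_fin_num (pint _).
Qed.

Lemma iRC p q : iR p q = iR q p.
Proof. by rewrite /iR /ipoly; under eq_integral do rewrite mulrC. Qed.

Lemma iRD p q s : iR (p + q) s = iR p s + iR q s.
Proof.
apply: EFin_inj; rewrite EFinD -!ipolyE /ipoly.
under eq_integral do rewrite hornerD mulrDl EFinD.
apply: integralD => //.
- by under eq_fun do rewrite -hornerM; exact: pint.
- by under eq_fun do rewrite -hornerM; exact: pint.
Qed.

Lemma iRZ a p s : iR (a *: p) s = a * iR p s.
Proof.
apply: EFin_inj; rewrite EFinM -!ipolyE /ipoly.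
under eq_integral do rewrite hornerZ -mulrA EFinM.
apply: integralZl => //.
by under eq_fun do rewrite -hornerM; exact: pint.
Qed.

Lemma iR0l s : iR 0 s = 0.
Proof. by rewrite -(scale0r (0 : {poly R})) iRZ mul0r. Qed.

Lemma iRB p q s : iR (p - q) s = iR p s - iR q s.
Proof. by rewrite iRD -scaleN1r iRZ mulN1r. Qed.

Variable phi : nat -> {poly R}.
Hypothesis on : orthonormal_polys mu phi.

Lemma iR_on n m : iR (phi n) (phi m) = (n == m)%:R.
Proof. by case: on => _ [_ h]; rewrite /iR h. Qed.

Lemma orth N (p : {poly R}) : (size p <= N)%N -> forall m, (N <= m)%N -> iR p (phi m) = 0.
Proof.
elim: N p => [|N IH] p hp m hm.
  by move: hp; rewrite leqn0 size_poly_eq0 => /eqP ->; rewrite iR0l.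
case: on => hs _.
have h := size_sub_top hp (hs N).
rewrite -(subrK ((p`_N / lead_coef (phi N)) *: phi N) p) iRD iRZ iR_on.
rewrite (IH _ h m (ltnW hm)).
have : N != m by rewrite neq_ltn hm.
by move=> /negbTE ->; rewrite mulr0 addr0.
Qed.

Lemma zero N (s : {poly R}) : (size s <= N)%N -> (forall k, (k < N)%N -> iR s (phi k) = 0) -> s = 0.
Proof.
elim: N s => [|N IH] s hs hk.
  by move: hs; rewrite leqn0 size_poly_eq0 => /eqP ->.
case: on => hsz [hl _].
set c := s`_N / lead_coef (phi N).
have h := size_sub_top hs (hsz N).
have c0 : c = 0.
  have := hk N (ltnSn N).
  rewrite -(subrK (c *: phi N) s) iRD iRZ iR_on eqxx mulr1.
  by rewrite (orth h (leqnn N)) add0r.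
move: h; rewrite -/c c0 scale0r subr0 => h.
apply: IH => // k hkN; exact: hk (ltnW hkN).
Qed.

End S.

Lemma sizeD (R : ringType) N (p q : {poly R}) : (size p <= N)%N -> (size q <= N)%N -> (size (p + q)%R <= N)%N.
Proof. by move=> hp hq; apply: leq_trans (size_polyD _ _) _; rewrite geq_max hp hq. Qed.
Lemma sizeB (R : ringType) N (p q : {poly R}) : (size p <= N)%N -> (size q <= N)%N -> (size (p - q)%R <= N)%N.
Proof. by move=> hp hq; apply: sizeD => //; rewrite size_polyN. Qed.
Lemma sizeZ (R : ringType) N a (p : {poly R}) : (size p <= N)%N -> (size (a *: p) <= N)%N.
Proof. by move=> hp; apply: leq_trans (size_scale_leq _ _) hp. Qed.

Lemma Lsize (R : realType) (L : {linear {poly R} -> {poly R}}) (Phi : nat -> {poly R})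
  (Lambda : nat -> R) : (forall n, size (Phi n) = n.+1) ->
  (forall n, L (Phi n) = Lambda n *: Phi n) ->
  forall N (p : {poly R}), (size p <= N)%N -> (size (L p) <= N)%N.
Proof.
move=> hs hL; elim => [|N IH] p hp.
  by move: hp; rewrite leqn0 size_poly_eq0 => /eqP ->; rewrite linear0 size_poly0.
have h := size_sub_top hp (hs N).
move: h; set q := (p - _)%R => h.
have -> : p = q + (p`_N / lead_coef (Phi N)) *: Phi N by rewrite /q subrK.
rewrite linearD linearZ /= hL.
apply: leq_trans (size_polyD _ _) _.
rewrite geq_max (leq_trans (IH _ h)) //.
by apply: leq_trans (size_scale_leq _ _) _; apply: leq_trans (size_scale_leq _ _) _; rewrite hs.
Qed.

Lemma dens (R : realType) (mu nu : {measure set R -> \bar R}) (r : {poly R}) :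
  finite_moments mu -> has_density mu nu r ->
  forall p q, ipoly mu p q = ipoly nu (r * p) q.
Proof.
move=> fm hd p q; rewrite /ipoly.
have := hd (fun x => (p * q).[x]) (pint fm (p * q)).
under eq_integral do rewrite hornerM.
move=> ->; apply: eq_integral => x _; rewrite !hornerM; congr EFin; ring.
Qed.

Theorem lemma6p1 (R : realType) (mu nu : {measure set R -> \bar R})
  (r : {poly R}) (Phi phi : nat -> {poly R})
  (L : {linear {poly R} -> {poly R}}) (Lambda : nat -> R) (gamma : R) :
  finite_moments mu -> finite_moments nu ->
  infinite_support mu -> infinite_support nu ->
  determinate mu -> determinate nu ->
  size r = 2%N ->
  has_density mu nu r ->
  orthonormal_polys mu Phi -> orthonormal_polys nu phi ->
  (forall p q : {poly R}, ipoly mu (L p) q = ipoly mu p (L q)) ->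
  (forall n, L (Phi n) = Lambda n *: Phi n) ->
  let T := fun p : {poly R} => r * (L p + gamma *: p) in
  (forall n m : nat, (1 < `|(n%:Z - m%:Z)%R|)%N ->
     ipoly nu (T (phi n)) (phi m) = 0%E) /\
  (forall n : nat, exists a b c : R,
     T (phi n) = a *: (if n is n'.+1 then phi n' else 0)
                 + b *: phi n + c *: phi n.+1).
Proof.
move=> fm fn _ _ _ _ hr hd onmu onnu hsym hL T.
have [hsPhi _] := onmu.
have [hsphi _] := onnu.
have Ls := Lsize hsPhi hL.
pose A m := L (phi m) + gamma *: phi m.
have sA m : (size (A m) <= m.+1)%N.
  apply: leq_trans (size_polyD _ _) _.
  rewrite geq_max Ls ?hsphi //.
  by apply: leq_trans (size_scale_leq _ _) _; rewrite hsphi.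
have sT m : (size (T (phi m)) <= m.+2)%N.
  apply: leq_trans (size_mul_leq _ _) _.
  by rewrite hr /=; apply: sA.
have P1 : forall n m : nat, (1 < `|(n%:Z - m%:Z)%R|)%N ->
     ipoly nu (T (phi n)) (phi m) = 0%E.
  move=> n m hnm.
  have [hm|hm] : (n.+2 <= m)%N \/ (m.+2 <= n)%N by lia.
    by rewrite (ipolyE fn) (orth fn onnu (sT n) hm).
  have e : iR mu (A n) (phi m) = iR mu (A m) (phi n).
    rewrite !(iRD fm) !(iRZ fm).
    have -> : iR mu (L (phi n)) (phi m) = iR mu (L (phi m)) (phi n).
      by rewrite /iR hsym; exact: iRC.
    by rewrite (iRC mu (phi n)).
  rewrite /T -/(A n) -(dens fm hd) (ipolyE fm) e -(ipolyE fm) (dens fm hd).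
  by rewrite (ipolyE fn) (orth fn onnu (sT m) hm).
split => // n.
have hon k j : iR nu (phi k) (phi j) = (k == j)%:R := iR_on onnu k j.
have hP k : (k.+1 < n)%N -> iR nu (T (phi n)) (phi k) = 0.
  move=> hk; apply: EFin_inj; rewrite -(ipolyE fn) P1 //; lia.
have sphi k N : (k < N)%N -> (size (phi k) <= N)%N by move=> h; rewrite hsphi.
case: n hP sT => [|n] hP sT.
  exists 0, (iR nu (T (phi 0%N)) (phi 0%N)), (iR nu (T (phi 0%N)) (phi 1%N)).
  apply/eqP; rewrite -subr_eq0; apply/eqP.
  apply: (zero fn onnu (N := 2)).
    by rewrite !sizeB ?sizeD ?sizeZ ?sphi ?sT ?size_poly0.
  move=> k hk; rewrite (iRB fn) !(iRD fn) !(iRZ fn) (iR0l fn) !hon.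
  have [->|->] : k = 0%N \/ k = 1%N by lia.
    by rewrite /=; ring.
  by rewrite /=; ring.
exists (iR nu (T (phi n.+1)) (phi n)), (iR nu (T (phi n.+1)) (phi n.+1)),
  (iR nu (T (phi n.+1)) (phi n.+2)).
apply/eqP; rewrite -subr_eq0; apply/eqP.
apply: (zero fn onnu (N := n.+3)).
  apply: sizeB; [exact: sT | apply: sizeD; [apply: sizeD|]; apply: sizeZ; apply: sphi; lia].
move=> k hk; rewrite (iRB fn) !(iRD fn) !(iRZ fn) !hon.
have [->|[->|[->|lt]]] : k = n.+2 \/ k = n.+1 \/ k = n \/ (k < n)%N by lia.
- have e1 : (n == n.+2) = false by lia.
  have e2 : (n.+1 == n.+2) = false by lia.
  rewrite eqxx e1 e2 /=; ring.
- have e1 : (n == n.+1) = false by lia.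
  have e2 : (n.+2 == n.+1) = false by lia.
  rewrite eqxx e1 e2 /=; ring.
- have e1 : (n.+1 == n) = false by lia.
  have e2 : (n.+2 == n) = false by lia.
  rewrite eqxx e1 e2 /=; ring.
- have e0 : (k.+1 < n.+1)%N by lia.
  have e1 : (n == k) = false by lia.
  have e2 : (n.+1 == k) = false by lia.
  have e3 : (n.+2 == k) = false by lia.
  rewrite hP // e1 e2 e3 /=; ring.
Qed.
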